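(* Let $n=2^s$, $q=2^r$ ($s,r$ positive integers). The dual code $C^{\perp}(SL(n,q))$ of the binary code $C(SL(n,q))$ is \[ C^{\perp}(SL(n,q))=\{c(a)=(tr(a\,Tr(g_1)),tr(a\,Tr(g_2)),\dots,tr(a\,Tr(g_N))) : a\in\mathbb{F}_q\}. \]
   Context: $\mathbb{F}_q$ is the field with $q$ elements and $tr:\mathbb{F}_q\to\mathbb{F}_2$ the absolute trace. $N=|SL(n,q)|$, $g_1,\dots,g_N$ is a fixed ordering of $SL(n,q)$, $Tr$ is the matrix trace, $v=(Tr(g_1),\dots,Tr(g_N))\in\mathbb{F}_q^N$, and $C(SL(n,q))=\{u\in\mathbb{F}_2^N: u\cdot v=0\}$ (dot product in $\mathbb{F}_q$); the dual is taken in $\mathbb{F}_2^N$ with respect to the standard inner product. *)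

(* Defs.v *)
From HB Require Import structures.
From mathcomp Require Import all_boot all_order all_algebra.
Set Implicit Arguments. Unset Strict Implicit. Unset Printing Implicit Defensive.
Import GRing.Theory.
Local Open Scope ring_scope.

Definition SLn (F : finFieldType) (n : nat) := {A : 'M[F]_n | \det A == 1}.

(* Absolute trace F_q -> F_2 for q = 2^r: tr x = x + x^2 + ... + x^(2^(r-1)),
   which lies in {0,1} \subset F_q; we read it as an element of 'F_2. *)
Definition abs_trace (F : finFieldType) (r : nat) (x : F) : 'F_2 :=
  if \sum_(i < r) x ^+ (2 ^ i) == 0 then 0 else 1.

Definition word (F : finFieldType) (n : nat) := {ffun SLn F n -> 'F_2}.

Definition F2_to_F (F : finFieldType) (b : 'F_2) : F := (nat_of_ord b)%:R.

Definition codeC (F : finFieldType) (n : nat) : {set word F n} :=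
  [set u : word F n | \sum_(g : SLn F n) @F2_to_F F (u g) * \tr (val g) == 0].

Definition dual_code (F : finFieldType) (n : nat) (C : {set word F n})
  : {set word F n} :=
  [set w : word F n | [forall u in C, \sum_(g : SLn F n) u g * w g == 0]].

Definition cword (F : finFieldType) (n r : nat) (a : F) : word F n :=
  [ffun g : SLn F n => abs_trace r (a * \tr (val g))].

(* Main.v *)
Require Import Defs.
From mathcomp Require Import all_boot all_order all_algebra all_field.
Set Implicit Arguments. Unset Strict Implicit. Unset Printing Implicit Defensive.
Import GRing.Theory.
Local Open Scope ring_scope.

Definition Tf (F : finFieldType) (r : nat) (x : F) : F := \sum_(i < r) x ^+ (2 ^ i).

Lemma char2 (F : finFieldType) r : #|F| = (2 ^ r)%N -> 2 \in [pchar F].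
Proof. by move=> h; apply: (card_finPcharP h). Qed.

Lemma two0 (F : finFieldType) r : #|F| = (2 ^ r)%N -> 2%:R = 0 :> F.
Proof. by move=> h; apply: pcharf0 (char2 h). Qed.

Lemma addxx (F : finFieldType) r : #|F| = (2 ^ r)%N -> forall x : F, x + x = 0.
Proof. by move=> h x; rewrite -mulr2n -mulr_natr (two0 h) mulr0. Qed.

Lemma sqrD (F : finFieldType) r : #|F| = (2 ^ r)%N -> forall x y : F,
  (x + y) ^+ 2 = x ^+ 2 + y ^+ 2.
Proof. by move=> h x y; rewrite sqrrD mulr2n (addxx h) addr0. Qed.

Lemma powD (F : finFieldType) r : #|F| = (2 ^ r)%N -> forall i (x y : F),
  (x + y) ^+ (2 ^ i) = x ^+ (2 ^ i) + y ^+ (2 ^ i).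
Proof.
move=> h; elim=> [|i IH] x y; first by rewrite !expr1.
by rewrite expnSr !exprM IH (sqrD h).
Qed.

Lemma Tf_add (F : finFieldType) r : #|F| = (2 ^ r)%N -> forall x y : F,
  Tf r (x + y) = Tf r x + Tf r y.
Proof.
move=> h x y; rewrite /Tf -big_split /=; apply: eq_bigr => i _; exact: powD h _ _ _.
Qed.

Lemma Tf0 (F : finFieldType) r : Tf r (0 : F) = 0.
Proof. by rewrite /Tf big1 // => i _; rewrite expr0n expn_eq0. Qed.

Lemma sqr_sum (F : finFieldType) r : #|F| = (2 ^ r)%N -> forall (m : nat) (f : nat -> F),
  (\sum_(i < m) f i) ^+ 2 = \sum_(i < m) (f i) ^+ 2.
Proof.
move=> h; elim=> [|m IH] f; first by rewrite !big_ord0 expr0n.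
by rewrite !big_ord_recr /= (sqrD h) IH.
Qed.

Lemma Tf_idem (F : finFieldType) r : #|F| = (2 ^ r)%N -> (0 < r)%N -> forall x : F,
  Tf r x ^+ 2 = Tf r x.
Proof.
move=> h r0 x; rewrite /Tf (sqr_sum h r (fun i => x ^+ (2 ^ i))).
case: r h r0 => // r h _.
rewrite [LHS]big_ord_recr [RHS]big_ord_recl /=.
rewrite -exprM -expnSr -h expf_card expr1 addrC; congr (_ + _).
by apply: eq_bigr => i _; rewrite -exprM -expnSr.
Qed.

Lemma F2_cases (b : 'F_2) : b = 0 \/ b = 1.
Proof. by case: b => [[|[|k]] Hk] //; [left|right]; apply: val_inj. Qed.

Lemma F2_11 : 1 + 1 = 0 :> 'F_2.
Proof. by apply/eqP. Qed.

Lemma F2F0 (F : finFieldType) : F2_to_F F 0 = 0.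
Proof. by []. Qed.
Lemma F2F1 (F : finFieldType) : F2_to_F F 1 = 1.
Proof. by []. Qed.

Lemma F2F_add (F : finFieldType) r : #|F| = (2 ^ r)%N -> forall b c : 'F_2,
  F2_to_F F (b + c) = F2_to_F F b + F2_to_F F c.
Proof.
move=> h b c; case: (F2_cases b) => ->; case: (F2_cases c) => ->;
  rewrite ?add0r ?addr0 ?F2F0 ?add0r ?addr0 //.
by rewrite F2_11 F2F0 F2F1 (addxx h).
Qed.

Lemma F2F_mul (F : finFieldType) (b c : 'F_2) :
  F2_to_F F (b * c) = F2_to_F F b * F2_to_F F c.
Proof.
by case: (F2_cases b) => ->; case: (F2_cases c) => ->;
  rewrite ?mul0r ?mulr0 ?mul1r ?F2F0 ?F2F1 ?mul0r ?mulr0 ?mul1r.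
Qed.

Lemma F2F_inj (F : finFieldType) : injective (F2_to_F F).
Proof.
move=> b c; case: (F2_cases b) => ->; case: (F2_cases c) => -> //;
  rewrite ?F2F0 ?F2F1 => /eqP; rewrite ?oner_eq0 // eq_sym oner_eq0 //.
Qed.

Lemma Tf01 (F : finFieldType) r : #|F| = (2 ^ r)%N -> (0 < r)%N -> forall x : F,
  Tf r x = 0 \/ Tf r x = 1.
Proof.
move=> h r0 x; have := Tf_idem h r0 x.
move/eqP; rewrite expr2 -subr_eq0.
have -> : forall t : F, t * t - t = t * (t - 1) by move=> t; rewrite mulrBr mulr1.
rewrite mulf_eq0 subr_eq0.
by case/orP=> /eqP ->; [left|right].
Qed.

Lemma F2F_at (F : finFieldType) r : #|F| = (2 ^ r)%N -> (0 < r)%N -> forall x : F,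
  F2_to_F F (abs_trace r x) = Tf r x.
Proof.
move=> h r0 x; rewrite /abs_trace -/(Tf r x).
by case: (Tf01 h r0 x) => ->; rewrite ?eqxx // oner_eq0.
Qed.

Lemma at_add (F : finFieldType) r : #|F| = (2 ^ r)%N -> (0 < r)%N -> forall x y : F,
  abs_trace r (x + y) = abs_trace r x + abs_trace r y.
Proof.
move=> h r0 x y; apply: (@F2F_inj F).
by rewrite (F2F_add h) !(F2F_at h r0) (Tf_add h).
Qed.

Lemma at0 (F : finFieldType) r : abs_trace r (0 : F) = 0.
Proof. by rewrite /abs_trace -/(Tf r 0) Tf0 eqxx. Qed.

Lemma Tf_nz (F : finFieldType) r : #|F| = (2 ^ r)%N -> (0 < r)%N ->
  exists y : F, Tf r y != 0.
Proof.
move=> h r0.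
pose P : {poly F} := \sum_(i < r) 'X^(2 ^ i).
have PE : forall x, P.[x] = Tf r x.
  by move=> x; rewrite /P horner_sum; apply: eq_bigr => i _; rewrite hornerXn.
have Pnz : P != 0.
  apply/eqP => /(congr1 (fun p : {poly F} => p`_1)).
  rewrite coef0 /P coef_sum (bigD1 (Ordinal r0)) //= coefXn expn0 eqxx big1 ?addr0.
    by move/eqP; rewrite oner_eq0.
  move=> i /eqP ne; rewrite coefXn.
  have -> : (1 == 2 ^ i)%N = false.
    rewrite -[X in X == _](expn0 2) eqn_exp2l //.
    by case: i ne => [[|i] ?] //= ne; exfalso; apply: ne; apply: val_inj.
  by [].
have Psz : (size P <= 2 ^ r)%N.
  apply: leq_trans (size_sum _ _ _) _; apply/bigmax_leqP => i _.
  by rewrite size_polyXn ltn_exp2l.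
case: (boolP [exists y : F, Tf r y != 0]) => [/existsP [y Hy]|Hall]; first by exists y.
move: Hall; rewrite negb_exists => /forallP Hall.
exfalso.
have Hr : all (root P) (enum F).
  by apply/allP => x _; rewrite /root PE; have := Hall x; rewrite negbK.
have := max_poly_roots Pnz Hr (enum_uniq F).
by rewrite -cardE h ltnNge Psz.
Qed.

Lemma at_nondeg (F : finFieldType) r : #|F| = (2 ^ r)%N -> (0 < r)%N -> forall a : F,
  (forall x, abs_trace r (a * x) = 0) -> a = 0.
Proof.
move=> h r0 a H; apply/eqP; apply/negPn/negP => anz.
have [y Hy] := Tf_nz h r0.
have := H (a^-1 * y); rewrite mulrA mulfV // mul1r /abs_trace -/(Tf r y).
by rewrite (negbTE Hy).
Qed.

Lemma oppF (F : finFieldType) r : #|F| = (2 ^ r)%N -> forall x : F, - x = x.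
Proof. by move=> h x; apply/eqP; rewrite eq_sym -subr_eq0 opprK (addxx h). Qed.

Lemma F2xx (b : 'F_2) : b + b = 0.
Proof. by case: (F2_cases b) => ->; rewrite ?addr0 ?F2_11. Qed.

Lemma additive_trace (F : finFieldType) r : #|F| = (2 ^ r)%N -> (0 < r)%N ->
  forall lam : F -> 'F_2, (forall x y, lam (x + y) = lam x + lam y) ->
  exists a, forall x, lam x = abs_trace r (a * x).
Proof.
move=> h r0 lam Hlam.
pose c2 := char2 h.
pose P := pPrimeCharType c2.
pose B := vbasis (fullv : {vspace P}).
pose d := \dim (fullv : {vspace P}).
have expand : forall f : F -> 'F_2, (forall x y, f (x + y) = f x + f y) ->
    forall x : F, f x = \sum_(i < d) coord B i (x : P) * f (B`_i : F).
  move=> f Hf x.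
  have f0 : f 0 = 0.
    by apply/eqP; rewrite -(addrK (f 0) (f 0)) -Hf addr0 subrr.
  rewrite {1}(coord_vbasis (memvf (x : P))).
  rewrite (big_morph f Hf f0); apply: eq_bigr => i _.
  by case: (F2_cases (coord B i x)) => ->; rewrite ?scale0r ?scale1r ?mul0r ?mul1r.
have atadd : forall a : F, forall x y, abs_trace r (a * (x + y)) =
    abs_trace r (a * x) + abs_trace r (a * y).
  by move=> a x y; rewrite mulrDr (at_add h r0).
pose Phi := fun a : F => [ffun i : 'I_d => abs_trace r (a * (B`_i : F))].
have Phi_inj : injective Phi.
  move=> a b eqab.
  have e : forall x, abs_trace r (a * x) = abs_trace r (b * x).
    move=> x; rewrite (expand _ (atadd a)) (expand _ (atadd b)).
    apply: eq_bigr => i _; congr (_ * _).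
    by have := congr1 (fun f : {ffun 'I_d -> 'F_2} => f i) eqab; rewrite /Phi !ffunE.
  have : a + b = 0.
    apply: (at_nondeg h r0) => x; rewrite mulrDl (at_add h r0) e; exact: F2xx.
  by move/eqP; rewrite addr_eq0 (oppF h) => /eqP.
have cardP : #|F| = #|{ffun 'I_d -> 'F_2}|.
  rewrite card_ffun card_ord.
  have := card_vspace (fullv : {vspace P}); rewrite card_vspacef => ->.
  by rewrite card_ord (card_ord (\dim _)).
have full : [set Phi a | a : F] = [set: {ffun 'I_d -> 'F_2}].
  apply/eqP; rewrite eqEcard subsetT /= cardsT card_imset // -cardP //.
have : [ffun i : 'I_d => lam (B`_i : F)] \in [set Phi a | a : F] by rewrite full inE.
case/imsetP => a _ ea; exists a => x.
rewrite (expand _ Hlam) (expand _ (atadd a)); apply: eq_bigr => i _.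
by have := congr1 (fun f : {ffun 'I_d -> 'F_2} => f i) ea; rewrite /Phi !ffunE => ->.
Qed.

Definition A2 (F : comPzRingType) (y : F) : 'M[F]_2 :=
  \matrix_(i, j) (if i == j then (if i == 0 then y else 0) else 1).
Lemma detA2 (F : comPzRingType) (y : F) : \det (A2 y) = -1.
Proof.
rewrite (expand_det_row _ 0) !big_ord_recl big_ord0 /cofactor !det_mx11 !mxE /=.
by rewrite !mulr0 !mul1r add0r addr0 mulr1 expr1.
Qed.
Lemma trA2 (F : comPzRingType) (y : F) : \tr (A2 y) = y.
Proof.
rewrite /mxtrace !big_ord_recl big_ord0 !mxE /=.
by rewrite !addr0.
Qed.

Definition Gm (F : finFieldType) m (y : F) : 'M[F]_(m.+2) := block_mx (A2 y) 0 0 1%:M.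

Lemma Gm_det (F : finFieldType) r : #|F| = (2 ^ r)%N -> forall m (y : F),
  \det (Gm m y) == 1.
Proof.
move=> h m y; rewrite /Gm; have -> := @det_ublock F 2 m (A2 y) 0 1%:M.
by rewrite detA2 det1 mulr1 (oppF h).
Qed.

Lemma Gm_tr (F : finFieldType) m (y : F) : \tr (Gm m y) = y + m%:R.
Proof. by rewrite /Gm; have -> := @mxtrace_block F 2 m (A2 y) 0 0 1%:M; rewrite trA2 mxtrace1. Qed.

Lemma sum_ind (R : pzRingType) (T : finType) (l : seq T) (f : T -> R) :
  \sum_(g : T) (\sum_(k <- l) (g == k)%:R) * f g = \sum_(k <- l) f k.
Proof.
under eq_bigr do rewrite mulr_suml.
rewrite exchange_big /=; apply: eq_bigr => k _.
rewrite (bigD1 k) //= eqxx mul1r big1 ?addr0 // => g /negbTE ->; by rewrite mul0r.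
Qed.

Lemma F2F_nat (F : finFieldType) (b : bool) : F2_to_F F (b%:R) = b%:R.
Proof. by case: b. Qed.

Lemma main_gen (F : finFieldType) r m : #|F| = (2 ^ r)%N -> (0 < r)%N ->
  dual_code (codeC F m.+2) = [set cword m.+2 r a | a : F].
Proof.
move=> h r0; apply/setP => w; rewrite inE; apply/idP/idP.
- move/forallP => Hw.
  pose u (l : seq (SLn F m.+2)) : word F m.+2 :=
    [ffun g => \sum_(k <- l) (g == k)%:R].
  have HC : forall l, \sum_(k <- l) \tr (val k) = 0 -> \sum_(k <- l) w k = 0.
    move=> l Hl; have := Hw (u l); rewrite inE.
    have -> : \sum_(g : SLn F m.+2) F2_to_F F (u l g) * \tr (val g) = 0.
      apply: etrans Hl; rewrite -(sum_ind l (fun g => \tr (val g))); apply: eq_bigr => g _.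
      rewrite ffunE (big_morph _ (F2F_add h) (F2F0 F)).
      by congr (_ * _); apply: eq_bigr => k _; rewrite F2F_nat.
    rewrite eqxx /= => /eqP H; rewrite -[RHS]H -sum_ind.
    by apply: eq_bigr => g _; rewrite ffunE.
  pose G := fun x : F => (exist (fun A => \det A == 1) (Gm m (x - m%:R)) (Gm_det h _ _)
     : SLn F m.+2).
  have trG : forall x, \tr (val (G x)) = x by move=> x; rewrite /= Gm_tr subrK.
  pose lam := fun x => w (G x).
  have F2eq : forall a b : 'F_2, a + b = 0 -> a = b.
    by move=> a b e; rewrite -[a]addr0 -(F2xx b) addrA e add0r.
  have Hi : forall g, w g = lam (\tr (val g)).
    move=> g; apply: F2eq; have := HC [:: g; G (\tr (val g))].
    by rewrite !big_cons !big_nil !addr0 trG (addxx h) => /(_ erefl).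
  have Hadd : forall x y, lam (x + y) = lam x + lam y.
    move=> x y; apply/esym/F2eq; have := HC [:: G x; G y; G (x + y)].
    rewrite !big_cons !big_nil !addr0 !trG addrA (addxx h)  => /(_ erefl); by rewrite addrA.
  have [a Ha] := additive_trace h r0 Hadd.
  apply/imsetP; exists a => //; apply/ffunP => g.
  by rewrite ffunE Hi Ha.
- case/imsetP => a _ ->; apply/forallP => u; apply/implyP; rewrite inE => /eqP Hu.
  have e : forall g, u g * cword m.+2 r a g =
      abs_trace r (a * (F2_to_F F (u g) * \tr (val g))).
    move=> g; rewrite ffunE.
    by case: (F2_cases (u g)) => ->; rewrite ?mul0r ?mulr0 ?at0 ?mul1r ?F2F0 ?F2F1.
  rewrite (eq_bigr _ (fun g _ => e g)) -(big_morph _ (at_add h r0) (at0 F r)).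
  by rewrite -mulr_sumr Hu mulr0 at0.
Qed.

Theorem proposition4 (s r : nat) (F : finFieldType) :
  (0 < s)%N -> (0 < r)%N -> #|F| = (2 ^ r)%N ->
  dual_code (codeC F (2 ^ s)) = [set cword (2 ^ s) r a | a : F].
Proof.
move=> s0 r0 h.
have : (1 < 2 ^ s)%N by rewrite -{1}(expn0 2) ltn_exp2l.
move: (2 ^ s)%N => n; case: n => [|[|m]] // _.
exact: main_gen.
Qed.
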